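(* Assume $\bm\lambda\neq0$ and $\bm\mu\neq0$. For $r\in\mathbb Z$ and a polynomial $f\in\mathbb C[x]$ define the operator $T_{r,f}=\sum_{j\in\mathbb Z} f(-j)\,:a(r-j)a^*(j):$ on $M_1(\bm\lambda,\bm\mu)$ (well defined, since on each vector only finitely many summands act nontrivially). Then $M_1(\bm\lambda,\bm\mu)$ is generated by $w$ under the operators $T_{r,f}$, i.e. the smallest subspace containing $w$ and invariant under all $T_{r,f}$ is $M_1(\bm\lambda,\bm\mu)$. Equivalently, $M_1(\bm\lambda,\bm\mu)$ is a cyclic module, generated by $w$, for the vertex algebra $\mathcal W_{1+\infty,c=-1}\cong M^0$.
   Context: Let $\widehat{\mathcal A}$ be the Weyl algebra: the unital associative complex algebra generated by $a(r),a^*(r)$ ($r\in\mathbb Z$) with relations $[a(r),a(s)]=[a^*(r),a^*(s)]=0$ and $[a(r),a^*(s)]=\delta_{r+s,0}$. Fix integers $n\ge 0$, $m\ge 1$, $\bm\lambda=(\lambda_0,\dots,\lambda_n)\in\mathbb C^{n+1}$, $\bm\mu=(\mu_1,\dots,\mu_m)\in\mathbb C^m$, and set $\lambda_i=0$ for $i>n$, $\mu_j=0$ for $j>m$. The Whittaker module $M_1(\bm\lambda,\bm\mu)=\widehat{\mathcal A}/\mathcal I$, where $\mathcal I$ is the left ideal generated by $a(i)-\lambda_i$ ($i\ge 0$) and $a^*(j)-\mu_j$ ($j\ge 1$); $w=w_{\bm\lambda,\bm\mu}$ denotes the image of $1$. Normal ordering: $:a(i)a^*(j):$ equals $a^*(j)a(i)$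 if $i\ge 0$ and $j\le 0$, and equals $a(i)a^*(j)$ otherwise. The operators $T_{r,f}$ are the images of $t^rf(D)$ ($D=t\,\partial_t$) under the representation of the central extension $\widehat{\mathcal D}$ of the Lie algebra of regular differential operators on $\mathbb C^*$; the Weyl vertex algebra $M$ has fields $a(z)=\sum a(r)z^{-r-1}$, $a^*(z)=\sum a^*(r)z^{-r}$, its subalgebra $M^0=\ker J^0(0)$ (with $J^0(z)=:a(z)a^*(z):$) is isomorphic to the simple vertex algebra $\mathcal W_{1+\infty}$ at central charge $-1$, and it is generated by the fields $:(\partial_z^k a^*(z))a(z):$, $k\ge0$, whose modes are the operators $T_{r,f}$ with $f(x)=x(x-1)\cdots(x-k+1)$. *)

(* Defs.v *)
From HB Require Import structures.
From mathcomp Require Import all_boot all_order all_algebra.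
From mathcomp Require Import finmap.
From mathcomp.multinomials Require Import monalg.
From mathcomp Require Import complex.
From mathcomp Require Import Rstruct.

Set Implicit Arguments.
Unset Strict Implicit.
Unset Printing Implicit Defensive.

Import Order.TTheory GRing.Theory Num.Theory.
Local Open Scope ring_scope.

Notation CC := (complex Rdefinitions.R).

(* Concrete model of the Whittaker module M_1(lam, mu) = \hat A / I.          *)
(* By PBW, \hat A / I is the free module over the "creation" variables       *)
(*    a(-k-1)  (k : nat)   <->  variable  inl k                              *)
(*    a*(-k)   (k : nat)   <->  variable  inr k                              *)
(* i.e. it is the polynomial ring in these infinitely many commuting          *)
(* variables, w = 1, and                                                     *)
(*    a(r)  , r < 0  : multiplication by the variable inl (-r-1)             *)
(*    a(r)  , r >= 0 : lam_r + d/d(inr r)                                    *)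
(*    a*(s) , s <= 0 : multiplication by the variable inr (-s)               *)
(*    a*(s) , s >= 1 : mu_s - d/d(inl (s-1))                                 *)

Definition Var : choiceType := (nat + nat)%type.
Definition Mon := cmonom Var.

Section Whittaker.
Variable K : fieldType.

Definition Wmod : Type := {malg K[Mon]}.

Definition mulvar (x : Var) (v : Wmod) : Wmod :=
  \sum_(mo <- msupp v) << v@_mo *g mulcm (ucm x) mo >>.

Definition dervar (x : Var) (v : Wmod) : Wmod :=
  \sum_(mo <- msupp v) << (v@_mo *+ (mo : Mon) x) *g divcm mo (ucm x) >>.

Variables (n m : nat) (lam : 'rV[K]_(n.+1)) (mu : 'rV[K]_m).

(* lam_i (i >= 0) and mu_j (j >= 1), extended by 0 *)
Definition lamx (i : nat) : K :=
  if (i < n.+1)%N =P true is ReflectT h then lam 0 (Ordinal h) else 0.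
Definition mux (j : nat) : K :=
  if (j.-1 < m)%N =P true is ReflectT h then
    (if (0 < j)%N then mu 0 (Ordinal h) else 0) else 0.

Definition aop (r : int) (v : Wmod) : Wmod :=
  match r with
  | Posz i => lamx i *: v + dervar (inr i) v
  | Negz k => mulvar (inl k) v
  end.

Definition astarop (s : int) (v : Wmod) : Wmod :=
  match s with
  | Posz 0 => mulvar (inr 0%N) v
  | Posz j => mux j *: v - dervar (inl j.-1) v
  | Negz k => mulvar (inr k.+1) v
  end.

Definition wvec : Wmod := 1%:MP.

Definition nord (i j : int) (v : Wmod) : Wmod :=
  if (0 <= i) && (j <= 0) then astarop j (aop i v) else aop i (astarop j v).

Definition Tpartial (r : int) (f : {poly K}) (v : Wmod) (N : nat) : Wmod :=
  \sum_(k < (2 * N).+1)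
     let j : int := k%:Z - N%:Z in f.[- j%:~R] *: nord (r - j) j v.

(* T_{r,f} v = u : the (finitely supported) series sum_j f(-j) :a(r-j)a*(j): v
   equals u, i.e. its symmetric partial sums are eventually equal to u. *)
Definition Tval (r : int) (f : {poly K}) (v u : Wmod) : Prop :=
  exists N0 : nat, forall N : nat, (N0 <= N)%N -> Tpartial r f v N = u.

End Whittaker.

(* Main.v *)
Require Import Defs.
From HB Require Import structures.
From mathcomp Require Import all_boot all_order all_algebra.
From mathcomp Require Import finmap.
From mathcomp.multinomials Require Import monalg.
From mathcomp Require Import complex.
From mathcomp Require Import Rstruct.
From mathcomp Require Import zify.
Import GRing.Theory.
Local Open Scope ring_scope.

Set Implicit Arguments.
Unset Strict Implicit.

Fact mU_key : unit. Proof. by []. Qed.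

Section Gen.
Variable K : fieldType.
Local Notation W := (Wmod K).
Implicit Types (u v : W) (c a b : K).

Definition mU := locked_with mU_key (fun (a : K) (mo : Mon) => (<< a *g mo >> : W)).

Lemma mUE (a : K) mo : mU a mo = << a *g mo >>.
Proof. by rewrite /mU locked_withE. Qed.

Lemma mcU (a : K) (mo k : Mon) : (mU a mo)@_k = a *+ (mo == k).
Proof. rewrite /mU locked_withE; exact: (mcoeffU mo a k). Qed.

Lemma mcZ (c : K) (x : W) k : (c *: x)@_k = c * x@_k.
Proof. exact: mcoeffZ. Qed.

Lemma mcD (x y : W) k : (x + y)@_k = x@_k + y@_k.
Proof. exact: mcoeffD. Qed.

Lemma mU0 mo : mU 0 mo = 0.
Proof. by rewrite /mU locked_withE; exact: monalgU0. Qed.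

Lemma mUD a b mo : mU (a + b) mo = mU a mo + mU b mo.
Proof. by apply/malgP => k; rewrite mcD !mcU mulrnDl. Qed.

Lemma mUZ (c a : K) (mo : Mon) : mU (c * a) mo = c *: mU a mo.
Proof. by apply/malgP => k; rewrite mcZ !mcU mulrnAr. Qed.

Lemma mU1 (a : K) (mo : Mon) : mU a mo = a *: mU 1 mo.
Proof. by rewrite -mUZ mulr1. Qed.

Lemma msupp_mU a mo : (msupp (mU a mo) `<=` [fset mo])%fset.
Proof. by rewrite /mU locked_withE; exact: msuppU_le. Qed.

Lemma mdecomp (v : W) : v = \sum_(mo <- msupp v) mU v@_mo mo.
Proof. by rewrite /mU locked_withE; exact: monalgE. Qed.

Definition Phi (F : Mon -> K -> W) (v : W) : W :=
  \sum_(mo <- msupp v) F mo v@_mo.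

Lemma PhiW (F : Mon -> K -> W) (v : W) (d : {fset Mon}) :
  (forall mo, F mo 0 = 0) -> (msupp v `<=` d)%fset ->
  Phi F v = \sum_(mo <- d) F mo v@_mo.
Proof.
move=> F0 le; rewrite /Phi (big_fset_incl _ le) // => x _.
by move/mcoeff_outdom => ->; rewrite F0.
Qed.

Section PhiLemmas.
Variable F : Mon -> K -> W.
Hypothesis FZ : forall mo c a, F mo (c * a) = c *: F mo a.
Hypothesis FD : forall mo a b, F mo (a + b) = F mo a + F mo b.

Lemma F0 mo : F mo 0 = 0.
Proof. by have := FZ mo 0 0; rewrite mul0r scale0r. Qed.

Lemma PhiZ c u : Phi F (c *: u) = c *: Phi F u.
Proof.
rewrite (@PhiW F _ (msupp u) F0) ?msuppZ_le // /Phi scaler_sumr.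
apply: congr_big => // mo _; rewrite mcZ; exact: FZ.
Qed.

Lemma PhiD u v : Phi F (u + v) = Phi F u + Phi F v.
Proof.
rewrite (@PhiW F _ (msupp u `|` msupp v)%fset F0) ?msuppD_le //.
rewrite (@PhiW F u (msupp u `|` msupp v)%fset F0) ?fsubsetUl //.
rewrite (@PhiW F v (msupp u `|` msupp v)%fset F0) ?fsubsetUr //.
rewrite -big_split /=; apply: congr_big => // mo _; rewrite mcD; exact: FD.
Qed.

Lemma PhiN u : Phi F (- u) = - Phi F u.
Proof.
rewrite /Phi msuppN -sumrN; apply: congr_big => // mo _.
rewrite mcoeffN; apply/eqP; rewrite -subr_eq0 opprK -FD addNr; apply/eqP; exact: F0.
Qed.

Lemma PhiU a mo : Phi F (mU a mo) = F mo a.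
Proof.
rewrite (@PhiW F _ [fset mo]%fset F0) ?msupp_mU //.
by rewrite big_seq_fset1 mcU eqxx mulr1n.
Qed.
End PhiLemmas.

Definition Fmul x : Mon -> K -> W := fun mo a => mU a (mulcm (ucm x) mo).
Definition Fder x : Mon -> K -> W :=
  fun mo a => mU (a *+ (mo : Mon) x) (divcm mo (ucm x)).

Lemma mulvarE x v : mulvar x v = Phi (Fmul x) v.
Proof. by rewrite /Fmul /Phi /mU locked_withE. Qed.
Lemma dervarE x v : dervar x v = Phi (Fder x) v.
Proof. by rewrite /Fder /Phi /mU locked_withE. Qed.

Lemma FmulZ x mo c a : Fmul x mo (c * a) = c *: Fmul x mo a.
Proof. exact: mUZ. Qed.
Lemma FmulD x mo a b : Fmul x mo (a + b) = Fmul x mo a + Fmul x mo b.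
Proof. exact: mUD. Qed.
Lemma FderZ x mo c a : Fder x mo (c * a) = c *: Fder x mo a.
Proof. by rewrite /Fder -mulrnAr mUZ. Qed.
Lemma FderD x mo a b : Fder x mo (a + b) = Fder x mo a + Fder x mo b.
Proof. by rewrite /Fder mulrnDl mUD. Qed.

Lemma mulvarZ x c u : mulvar x (c *: u) = c *: mulvar x u.
Proof. rewrite !mulvarE; apply: PhiZ; exact: FmulZ. Qed.
Lemma dervarZ x c u : dervar x (c *: u) = c *: dervar x u.
Proof. rewrite !dervarE; apply: PhiZ; exact: FderZ. Qed.
Lemma mulvarD x u v : mulvar x (u + v) = mulvar x u + mulvar x v.
Proof. rewrite !mulvarE; apply: PhiD; [exact: FmulZ | exact: FmulD]. Qed.
Lemma dervarD x u v : dervar x (u + v) = dervar x u + dervar x v.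
Proof. rewrite !dervarE; apply: PhiD; [exact: FderZ | exact: FderD]. Qed.
Lemma mulvarN x u : mulvar x (- u) = - mulvar x u.
Proof. rewrite !mulvarE; apply: PhiN; [exact: FmulZ | exact: FmulD]. Qed.
Lemma dervarN x u : dervar x (- u) = - dervar x u.
Proof. rewrite !dervarE; apply: PhiN; [exact: FderZ | exact: FderD]. Qed.

Lemma mulvar0 x : mulvar x (0 : W) = 0.
Proof. by rewrite /mulvar msupp0 big_seq_fset0. Qed.
Lemma dervar0 x : dervar x (0 : W) = 0.
Proof. by rewrite /dervar msupp0 big_seq_fset0. Qed.

Lemma mulvarU x a mo : mulvar x (mU a mo) = mU a (mulcm (ucm x) mo).
Proof. rewrite mulvarE PhiU //; exact: FmulZ. Qed.
Lemma dervarU x a mo : dervar x (mU a mo) =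
   mU (a *+ (mo : Mon) x) (divcm mo (ucm x)).
Proof. rewrite dervarE PhiU //; exact: FderZ. Qed.

Lemma dervar_van x v : (forall mo, mo \in msupp v -> (mo : Mon) x = 0%N) ->
  dervar x v = 0.
Proof.
move=> h; rewrite dervarE /Phi big_seq big1 // => mo /h.
by rewrite /Fder => ->; rewrite mulr0n mU0.
Qed.

End Gen.

Section P2.
Variable K : fieldType.
Local Notation W := (Wmod K).
Implicit Types (u v : W) (c a b : K).
Variables (n m : nat) (lam : 'rV[K]_(n.+1)) (mu : 'rV[K]_m).

Lemma lamx_out i : (n < i)%N -> lamx lam i = 0.
Proof. by move=> hi; rewrite /lamx; case: eqP => // h; exfalso; move: h; rewrite ltnS leqNgt hi. Qed.

Lemma mux_out j : (m < j)%N -> mux mu j = 0.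
Proof.
move=> hj; rewrite /mux; case: eqP => // h; exfalso; move: h.
by case: j hj => //= j hj; rewrite ltnNge -ltnS hj.
Qed.

Definition vidx (y : Var) : nat := match y with inl k => k | inr k => k end.

Definition vbound v : nat :=
  (\max_(mo <- msupp v) \max_(y <- finsupp (mo : Mon)) (vidx y).+1)%N.

Lemma vbound_spec v mo y : mo \in msupp v -> (vbound v <= vidx y)%N ->
  (mo : Mon) y = 0%N.
Proof.
move=> hmo hb; apply/eqP; rewrite cmE_eq0; apply/negP => hy.
have h1 : ((vidx y).+1 <= \max_(y <- finsupp (mo : Mon)) (vidx y).+1)%N.
  exact: (@leq_bigmax_seq _ _ xpredT (fun y => (vidx y).+1) y).
have h2 : (\max_(y <- finsupp (mo : Mon)) (vidx y).+1 <= vbound v)%N.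
  exact: (@leq_bigmax_seq _ _ xpredT
     (fun mo : Mon => \max_(y <- finsupp (mo : Mon)) (vidx y).+1)%N mo).
by move: (leq_trans h1 (leq_trans h2 hb)); rewrite ltnn.
Qed.

Lemma dervar_big v y : (vbound v <= vidx y)%N -> dervar y v = 0.
Proof. move=> hb; apply: dervar_van => mo hmo; exact: (vbound_spec hmo hb). Qed.

Lemma aop0 r : aop lam r (0 : W) = 0.
Proof. case: r => [i|k] /=; first by rewrite dervar0 scaler0 addr0. by rewrite mulvar0. Qed.

Lemma astarop0 s : astarop mu s (0 : W) = 0.
Proof. case: s => [[|j]|k] /=; by rewrite ?mulvar0 ?dervar0 ?scaler0 ?subr0. Qed.

End P2.

Section P3.
Variable K : fieldType.
Local Notation W := (Wmod K).
Implicit Types (u v : W) (c a b : K).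
Variables (n m : nat) (lam : 'rV[K]_(n.+1)) (mu : 'rV[K]_m).

Lemma nord_van r v (j : int) : (vbound v + n + m + `|r| < `|j|)%N ->
  nord lam mu (r - j) j v = 0.
Proof.
case: j => [j|t] hb.
- case E: (r - Posz j) => [i|t]; first by exfalso; lia.
  rewrite /nord.
  have -> : (0 <= Negz t) = false by [].
  case: j E hb => [|j] E hb; first by exfalso; lia.
  rewrite /= mux_out; last by lia.
  rewrite (dervar_big (v := v)); last by rewrite /=; lia.
  rewrite scale0r subrr; exact: mulvar0.
- case E: (r - Negz t) => [i|t']; last by exfalso; lia.
  rewrite /nord.
  have -> : (0 <= Posz i) && (Negz t <= 0) = true by [].
  rewrite /= lamx_out; last by lia.
  rewrite (dervar_big (v := v)); last by rewrite /=; lia.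
  rewrite scale0r addr0; exact: mulvar0.
Qed.

Hypothesis char0 : forall z : int, (z%:~R : K) = 0 -> z = 0.

Lemma isolate r (j0 : int) v : exists2 f : {poly K}, f.[- j0%:~R] != 0 &
  Tval lam mu r f v (f.[- j0%:~R] *: nord lam mu (r - j0) j0 v).
Proof.
pose B := (vbound v + n + m + `|r| + `|j0|)%N.
pose L := filter (predC1 j0) (map (fun k : nat => k%:Z - B%:Z) (iota 0 (2 * B).+1)).
pose f : {poly K} := \prod_(j <- L) ('X + (j%:~R)%:P).
have fE : forall x, f.[x] = \prod_(j <- L) (x + j%:~R).
  by move=> x; rewrite horner_prod; apply: congr_big => // j _; rewrite hornerD hornerX hornerC.
have fj0 : f.[- j0%:~R] != 0.
  rewrite fE prodf_seq_neq0; apply/allP => j hj /=.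
  move: hj; rewrite mem_filter /= => /andP[hj _].
  apply/eqP => h; move/eqP: hj; apply.
  apply/eqP; rewrite -subr_eq0; apply/eqP; apply: char0.
  by rewrite mulrzBr addrC.
exists f => //.
exists B => N hN.
rewrite /Tpartial.
have hk0 : ((absz (j0 + N%:Z)%R) < (2 * N).+1)%N by lia.
rewrite (bigD1 (Ordinal hk0)) //=.
have ek0 : ((absz (j0 + N%:Z)%R))%:Z - N%:Z = j0 by lia.
rewrite ek0 big1 ?addr0 //.
move=> k hk.
have hkj : k%:Z - N%:Z != j0.
  apply: contra hk => /eqP h; apply/eqP/val_inj => /=; lia.
have [hin|hout] := leqP (absz (k%:Z - N%:Z)%R) B.
  have hL : (k%:Z - N%:Z) \in L.
    rewrite mem_filter; apply/andP; split; first exact: hkj. apply/mapP; exists (absz (k%:Z - N%:Z + B%:Z)%R).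
      rewrite mem_iota; lia.
    lia.
  rewrite fE.
  suff -> : \prod_(j <- L) (- (k%:Z - N%:Z)%:~R + j%:~R) = 0 :> K by rewrite scale0r.
  apply/eqP; rewrite prodf_seq_eq0; apply/hasP; exists (k%:Z - N%:Z) => //=.
  by rewrite addNr.
rewrite nord_van ?scaler0 //; lia.
Qed.

End P3.

Section P4.
Variable K : fieldType.
Local Notation W := (Wmod K).
Implicit Types (u v : W) (c a b : K).
Variables (n m : nat) (lam : 'rV[K]_(n.+1)) (mu : 'rV[K]_m).
Hypothesis char0 : forall z : int, (z%:~R : K) = 0 -> z = 0.
Variable S : W -> Prop.
Hypothesis S0 : S 0.
Hypothesis Slin : forall c u v, S u -> S v -> S (c *: u + v).
Hypothesis ST : forall (r : int) (f : {poly K}) (v u : W), S v -> Tval lam mu r f v u -> S u.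

Lemma SZ c u : S u -> S (c *: u).
Proof. by move=> hu; have := Slin c hu S0; rewrite addr0. Qed.

Lemma SD u v : S u -> S v -> S (u + v).
Proof. by move=> hu hv; have := Slin 1 hu hv; rewrite scale1r. Qed.

Lemma Snord p q v : S v -> S (nord lam mu p q v).
Proof.
move=> hv; have [f hf hT] := isolate lam mu char0 (p + q) q v.
have := ST hv hT; rewrite addrK => h.
have := SZ (f.[- q%:~R])^-1 h; rewrite scalerA mulVf // scale1r //.
Qed.

Lemma Ssolve c A X Z : c != 0 -> S X -> S Z -> X = c *: A + Z -> S A.
Proof.
move=> hc hX hZ hE.
have h1 : S ((-1) *: Z + X) by exact: Slin.
have : (-1) *: Z + X = c *: A by rewrite hE scaleN1r addrC addrK.
move=> e; rewrite e in h1.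
by have := SZ c^-1 h1; rewrite scalerA mulVf // scale1r.
Qed.

Lemma wvecE : wvec K = mU 1 (@onecm Var).
Proof. by rewrite /mU locked_withE. Qed.

Lemma cm_split (mo : Mon) y : (0 < mo y)%N -> mo = mulcm (ucm y) (divcm mo (ucm y)).
Proof.
move=> h; apply/eqP/cmP => i; rewrite mulcmE divcmE ucmE.
case: eqP => [<-|_] /=; last by rewrite subn0.
by rewrite add1n subn1 prednK.
Qed.

Lemma mdeg_mulU x (mo : Mon) : mdeg (mulcm (ucm x) mo) = (mdeg mo).+1.
Proof. by rewrite (mdegM (ucm x) mo) mdegU. Qed.

Lemma Sscal_mon d : (forall mo : Mon, (mdeg mo <= d)%N -> S (mU 1 mo)) ->
  forall a (mo : Mon), (mdeg mo <= d)%N -> S (mU a mo).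
Proof. by move=> IH a mo h; rewrite mU1; apply: SZ; apply: IH. Qed.

Lemma Sder d : (forall mo : Mon, (mdeg mo <= d)%N -> S (mU 1 mo)) ->
  forall x z (mo0 : Mon) a, (mdeg mo0 <= d)%N ->
  S (mU (a *+ mo0 z) (mulcm (ucm x) (divcm mo0 (ucm z)))).
Proof.
move=> IH x z mo0 a h.
case E: (mo0 z) => [|j]; first by rewrite mulr0n mU0.
apply: (Sscal_mon IH); rewrite mdeg_mulU.
have : (0 < mo0 z)%N by rewrite E.
move/cm_split => e; move: h; rewrite {1}e mdeg_mulU; done.
Qed.

Variables (N M' : nat).
Hypothesis hN : lamx lam N != 0.
Hypothesis hM : mux mu M'.+1 != 0.
Hypothesis Sw : S (wvec K).

Opaque mulvar dervar.
Lemma Smon d : forall mo : Mon, (mdeg mo <= d)%N -> S (mU 1 mo).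
Proof.
elim: d => [|d IH] mo hd.
  have : mdeg mo = 0%N by move: hd; rewrite leqn0 => /eqP.
  by move/mdeg_eq0I => ->; rewrite -wvecE.
case: (ltnP (mdeg mo) d.+1) => [hlt|hge]; first by apply: IH; rewrite -ltnS.
have hdeg : mdeg mo = d.+1 by apply/eqP; rewrite eqn_leq hd hge.
case: (fset_0Vmem (finsupp mo)) => [e|[y hy]].
  by move: hdeg; rewrite mdegE e big_seq_fset0.
have hy0 : (0 < mo y)%N by rewrite lt0n cmE_neq0.
have emo := cm_split hy0.
have hmo' : (mdeg (divcm mo (ucm y)) <= d)%N.
  by move: hdeg; rewrite {1}emo mdeg_mulU => [[->]].
have Smo' := IH _ hmo'.
case: y hy hy0 emo hmo' Smo' => [k|k] hy hy0 emo hmo' Smo'.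
- have hX := Snord (Negz k) (Posz M'.+1) Smo'.
  apply: (Ssolve hM hX (SZ (-1) (Sder IH (inl k) (inl M') 1 hmo'))).
  rewrite /nord /=.
  set D := dervar _ _. have eD : D = _ := dervarU _ _ _. clearbody D.
  rewrite mulvarD mulvarN mulvarZ mulvarU eD mulvarU -emo scaleN1r.
  done.
- have [q [hq0 hqE]] : exists q : int, (q <= 0) /\ forall w, astarop mu q w = mulvar (inr k) w.
    by case: k {hy hy0 emo hmo' Smo'} => [|k]; [exists (Posz 0) | exists (Negz k)].
  have hX := Snord (Posz N) q Smo'.
  apply: (Ssolve hN hX (Sder IH (inr k) (inr N) 1 hmo')).
  have -> : nord lam mu (Posz N) q (mU 1 (divcm mo (ucm (inr k)))) =
     astarop mu q (aop lam (Posz N) (mU 1 (divcm mo (ucm (inr k))))).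
    by rewrite /nord hq0.
  rewrite hqE /=.
  set D := dervar _ _. have eD : D = _ := dervarU _ _ _. clearbody D.
  rewrite mulvarD mulvarZ mulvarU eD mulvarU -emo.
  done.
Qed.

Lemma Sall v : S v.
Proof.
rewrite (mdecomp v); elim/big_ind: _ => //; first exact: SD.
move=> mo _; apply: (Sscal_mon (d := mdeg mo)) => //; exact: Smon.
Qed.

End P4.

Theorem theorem5p2 (n m : nat) (lam : 'rV[CC]_(n.+1)) (mu : 'rV[CC]_m) :
  (0 < m)%N -> lam != 0 -> mu != 0 ->
  forall S : Wmod CC -> Prop,
    S (wvec CC) ->
    S 0 ->
    (forall (c : CC) (u v : Wmod CC), S u -> S v -> S (c *: u + v)) ->
    (forall (r : int) (f : {poly CC}) (v u : Wmod CC),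
        S v -> Tval lam mu r f v u -> S u) ->
    forall v : Wmod CC, S v.
Proof.
move=> hm hlam hmu S Sw S0 Slin ST v.
have char0 : forall z : int, (z%:~R : CC) = 0 -> z = 0.
  by move=> z /eqP; rewrite intr_eq0 => /eqP.
have [i hi] : exists i, lam 0 i != 0.
  case: (pickP (fun i => lam 0 i != 0)) => [i hi|h]; first by exists i.
  by case/eqP: hlam; apply/rowP => i; rewrite !mxE; move/negbFE/eqP: (h i).
have [j hj] : exists j, mu 0 j != 0.
  case: (pickP (fun j => mu 0 j != 0)) => [j hj|h]; first by exists j.
  by case/eqP: hmu; apply/rowP => j; rewrite !mxE; move/negbFE/eqP: (h j).
have hN : lamx lam i != 0.
  rewrite /lamx; case: eqP => [h'|]; last by rewrite ltn_ord.
  by have -> : Ordinal h' = i by apply: val_inj.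
have hM : mux mu j.+1 != 0.
  rewrite /mux; case: eqP => [h'|] /=; last by rewrite ltn_ord.
  by have -> : Ordinal h' = j by apply: val_inj.
exact: (Sall char0 S0 Slin ST hN hM Sw v).
Qed.
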